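(* For every $n \ge 3$, a flow-evaluation scheme for $(2,1)$-Group-Cut on graphs with $n$ terminals (in which $T=V$) and with edge-weights bounded by a polynomial in $n$ requires storage of $\Omega(n^2 \log n)$ bits.
   Context: $G=(V,E,w)$ is an undirected graph with integer edge weights. For a partition $\Pi$, $\mathrm{cut}_G(\Pi)=\sum_{uv\in E:\Pi(u)\neq\Pi(v)} w(uv)$; a partition agrees with demand graph $D$ if it separates every pair in $D$; $\mathrm{mincut}_G(D)$ is the minimum of $\mathrm{cut}_G(\Pi)$ over partitions of $V$ agreeing with $D$. $(2,1)$-Group-Cut is the family of demand graphs $K_{A,B}$ (complete bipartite between disjoint $A,B\subseteq T$) with $|A|=2$, $|B|=1$. A flow-evaluation scheme is a data structure with a preprocessing operation that takes $G$, terminals $T\subseteq V$, and a family $\mathcal D$ of demand graphs on $T$ and builds a data structure, and a query operation that given $D\in\mathcal D$ outputs $\mathrm{mincut}_G(D)$ using only the data structure (no access to $G$). *)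

(* Defs.v *)
From mathcomp Require Import all_boot.
Set Implicit Arguments. Unset Strict Implicit. Unset Printing Implicit Defensive.

(* An undirected graph on vertex set V = 'I_n (all vertices are terminals, T = V)
   with nonnegative integer edge weights: the weight of edge {i,j} is G (i,j);
   weight 0 means "no edge".  Only well-formed G (symmetric, zero diagonal)
   are considered, see [wf_graph]. *)
Definition graph (n : nat) := {ffun 'I_n * 'I_n -> nat}.

Definition wf_graph n (W : nat) (G : graph n) : Prop :=
  (forall i j : 'I_n, G (i, j) = G (j, i)) /\
  (forall i : 'I_n, G (i, i) = 0) /\
  (forall i j : 'I_n, G (i, j) <= W).

(* A partition of V, given by a labelling of vertices (n labels suffice). *)
Definition partition n := {ffun 'I_n -> 'I_n}.

Definition cut n (G : graph n) (P : partition n) : nat :=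
  \sum_(p : 'I_n * 'I_n | (p.1 < p.2) && (P p.1 != P p.2)) G p.

(* Demand graph K_{A,B} with A = {a1, a2}, B = {b}: a partition agrees with it
   iff it separates every pair (a, b) with a in A. *)
Definition agrees n (P : partition n) (a1 a2 b : 'I_n) : bool :=
  (P a1 != P b) && (P a2 != P b).

(* Total weight: an upper bound on every cut, used as neutral element. *)
Definition total_weight n (G : graph n) : nat :=
  \sum_(p : 'I_n * 'I_n | p.1 < p.2) G p.

Definition mincut n (G : graph n) (a1 a2 b : 'I_n) : nat :=
  \big[minn/total_weight G]_(P : partition n | agrees P a1 a2 b) cut G P.

Definition group_cut_21_query n (a1 a2 b : 'I_n) : bool :=
  [&& a1 != a2, a1 != b & a2 != b].

(* Main.v *)
Require Import Defs.
From mathcomp Require Import all_boot zify.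
Set Implicit Arguments. Unset Strict Implicit. Unset Printing Implicit Defensive.

Lemma bigmin_le (T : eqType) (r : seq T) (Pr : pred T) (F : T -> nat) idx x0 :
  x0 \in r -> Pr x0 -> \big[minn/idx]_(x <- r | Pr x) F x <= F x0.
Proof.
elim: r => // y r IH; rewrite in_cons big_cons => /orP [/eqP <- | Hr] Px.
  by rewrite Px geq_minl.
case: (Pr y); last exact: IH.
by apply: leq_trans (geq_minr _ _) (IH Hr Px).
Qed.

Section Generic.
Variable n : nat.
Variable G : graph n.
Hypothesis Gsym : forall i j : 'I_n, G (i, j) = G (j, i).
Hypothesis Gdiag : forall i : 'I_n, G (i, i) = 0.

Definition cc (P : Defs.partition n) (i : 'I_n) :=
  \sum_(j : 'I_n) (if P i != P j then G (i, j) else 0).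

Lemma cut_double (P : Defs.partition n) : 2 * cut G P = \sum_i cc P i.
Proof.
rewrite /cc pair_bigA /=.
set F := fun p : 'I_n * 'I_n => (if P p.1 != P p.2 then G p else 0).
have -> : \sum_(p : 'I_n * 'I_n) (if P p.1 != P p.2 then G (p.1, p.2) else 0) = \sum_(p : 'I_n * 'I_n) F p.
  by apply: eq_bigr => -[i j].
have E : \sum_(p : 'I_n * 'I_n) F p = \sum_(p : 'I_n * 'I_n) (if p.1 < p.2 then F p else 0) + \sum_(p : 'I_n * 'I_n) (if p.2 < p.1 then F p else 0).
  rewrite -big_split /=; apply: eq_bigr => -[i j] _ /=.
  case: (ltngtP i j) => H; rewrite ?addn0 ?add0n //.
  have -> : i = j by apply: val_inj.
  by rewrite /F /= Gdiag; case: ifP.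
have E2 : \sum_(p : 'I_n * 'I_n) (if p.2 < p.1 then F p else 0) = \sum_(p : 'I_n * 'I_n) (if p.1 < p.2 then F p else 0).
  rewrite (reindex_inj (h := fun p : 'I_n * 'I_n => (p.2, p.1))); last first.
    by move=> [a b] [c d] /= [-> ->].
  apply: eq_bigr => -[i j] _ /=; rewrite /F /= Gsym; case: ifP => //.
  by rewrite eq_sym.
rewrite E E2 addnn -mul2n /cut big_mkcond /=; congr (2 * _).
apply: eq_bigr => -[i j] _ /=; rewrite /F /=.
by case: (i < j); case: (P i != P j).
Qed.

Lemma sum_ge2 (F : 'I_n -> nat) a b : a != b -> F a + F b <= \sum_i F i.
Proof.
move=> ab; rewrite (bigD1 a) //= (bigD1 b) /=; last by rewrite eq_sym.
by rewrite addnA leq_addr.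
Qed.

Lemma sum_ge3 (F : 'I_n -> nat) a b c : a != b -> a != c -> b != c ->
  F a + F b + F c <= \sum_i F i.
Proof.
move=> ab ac bc; rewrite (bigD1 a) //= (bigD1 b) /=; last by rewrite eq_sym ab.
rewrite (bigD1 c) /=; last by rewrite eq_sym ac eq_sym bc.
by rewrite !addnA leq_addr.
Qed.

Lemma sum_ge4 (F : 'I_n -> nat) a b c d : a != b -> a != c -> a != d ->
  b != c -> b != d -> c != d ->
  F a + F b + F c + F d <= \sum_i F i.
Proof.
move=> ab ac ad bc bd cd; rewrite (bigD1 a) //= (bigD1 b) /=; last by rewrite eq_sym ab.
rewrite (bigD1 c) /=; last by rewrite eq_sym ac eq_sym bc.
rewrite (bigD1 d) /=; last by rewrite eq_sym ad eq_sym bd eq_sym cd.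
by rewrite !addnA leq_addr.
Qed.

Variables u v h : 'I_n.
Hypotheses (uv : u != v) (uh : u != h) (vh : v != h).
Definition R (j : 'I_n) := (j != u) && (j != v).

Lemma decomp (F : 'I_n -> nat) : \sum_j F j = F u + F v + \sum_(j | R j) F j.
Proof.
rewrite (bigD1 u) //= (bigD1 v) /=; last by rewrite eq_sym uv.
rewrite addnA; congr (_ + _); apply: eq_bigl => j; rewrite /R andbC //.
Qed.

Lemma sumR_le (F : 'I_n -> nat) : \sum_(j | R j) F j <= \sum_j F j.
Proof. by rewrite (decomp F) leq_addl. Qed.

Definition V := \sum_(j | R j) G (u, j) + \sum_(j | R j) G (v, j).

Lemma degV : \sum_j G (u, j) + \sum_j G (v, j) = V + 2 * G (u, v).
Proof.
rewrite (decomp (fun j => G (u, j))) (decomp (fun j => G (v, j))) /V.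
rewrite Gdiag (Gsym v u) Gdiag. set a := G (u, v); set b := \sum_(j | R j) G (u, j); set c := \sum_(j | R j) G (v, j); lia.
Qed.

Lemma low2 (P : Defs.partition n) : P u != P h -> P v != P h ->
  (forall i, P i != P h -> (i == u) || (i == v)) -> 2 * V <= 2 * cut G P.
Proof.
move=> Pu Pv Hall; rewrite cut_double (decomp (cc P)).
have H1 : \sum_(j | R j) G (u, j) <= cc P u.
  apply: leq_trans (sumR_le _); rewrite leq_eqVlt; apply/orP; left; apply/eqP.
  apply: eq_bigr => j /andP [ju jv].
  have : P j == P h.
    by apply: contraT => /Hall; rewrite (negbTE ju) (negbTE jv).
  by move/eqP=> ->; rewrite Pu.
have H2 : \sum_(j | R j) G (v, j) <= cc P v.
  apply: leq_trans (sumR_le _); rewrite leq_eqVlt; apply/orP; left; apply/eqP.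
  apply: eq_bigr => j /andP [ju jv].
  have : P j == P h.
    by apply: contraT => /Hall; rewrite (negbTE ju) (negbTE jv).
  by move/eqP=> ->; rewrite Pv.
have H3 : V <= \sum_(j | R j) cc P j.
  rewrite /V -big_split /=; apply: leq_sum => j /andP [ju jv].
  have : P j == P h.
    by apply: contraT => /Hall; rewrite (negbTE ju) (negbTE jv).
  move/eqP=> Pj.
  apply: leq_trans (sum_ge2 (fun k => if P j != P k then G (j, k) else 0) uv).
  by rewrite /= Pj eq_sym Pu eq_sym Pv (Gsym u) (Gsym v).
rewrite /V in H3 *.
move: H1 H2 H3; set a := \sum_(j | R j) G (u, j); set b := \sum_(j | R j) G (v, j).
set x := cc P u; set y := cc P v; set z := \sum_(j | R j) cc P j; lia.
Qed.

Lemma low3 (P : Defs.partition n) t M : P u != P h -> P v != P h -> P t != P h ->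
  t != u -> t != v -> (forall j, j != h -> M <= G (h, j)) ->
  6 * M <= 2 * cut G P.
Proof.
move=> Pu Pv Pt tu tv HM; rewrite cut_double.
have th : t != h by apply: contraNneq Pt => ->.
have HMu := HM u uh; have HMv := HM v vh; have HMt := HM t th.
have hu : h != u by rewrite eq_sym.
have hv : h != v by rewrite eq_sym.
have ht : h != t by rewrite eq_sym.
have ut : u != t by rewrite eq_sym.
have vt : v != t by rewrite eq_sym.
have B := sum_ge4 (cc P) uv uh ut vh vt ht.
have Ch : G (h, u) + G (h, v) + G (h, t) <= cc P h.
  apply: leq_trans (sum_ge3 (fun k => if P h != P k then G (h, k) else 0) uv ut vt).
  have hPu : P h != P u by rewrite eq_sym.
  have hPv : P h != P v by rewrite eq_sym.
  have hPt : P h != P t by rewrite eq_sym.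
  by rewrite /= hPu hPv hPt.
have Cu : G (h, u) <= cc P u.
  apply: leq_trans (sum_ge2 (fun k => if P u != P k then G (u, k) else 0) hu).
  by rewrite /= Pu eqxx /= (Gsym h u) addn0.
have Cv : G (h, v) <= cc P v.
  apply: leq_trans (sum_ge2 (fun k => if P v != P k then G (v, k) else 0) hv).
  by rewrite /= Pv eqxx /= (Gsym h v) addn0.
have Ct : G (h, t) <= cc P t.
  apply: leq_trans (sum_ge2 (fun k => if P t != P k then G (t, k) else 0) ht).
  by rewrite /= Pt eqxx /= (Gsym h t) addn0.
apply: leq_trans B.
move: Ch Cu Cv Ct HMu HMv HMt; clear HM.
move: (cc P u) (cc P v) (cc P h) (cc P t) (G (h, u)) (G (h, v)) (G (h, t)) M.
clear. move=> x y z w a b c m. lia.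
Qed.


Definition P0 : Defs.partition n := [ffun i => if R i then h else u].

Lemma cutP0 : cut G P0 = V.
Proof.
have hu : (h == u) = false by apply/negbTE; rewrite eq_sym.
have E : 2 * cut G P0 = 2 * V.
  rewrite cut_double (decomp (cc P0)).
  have Ru : R u = false by rewrite /R eqxx.
  have Rv : R v = false by rewrite /R eqxx andbF.
  have Cu : cc P0 u = \sum_(j | R j) G (u, j).
    rewrite /cc [in RHS]big_mkcond; apply: eq_bigr => j _.
    rewrite !ffunE Ru; case: (R j) => /=; by rewrite ?uh ?vh ?eqxx.
  have Cv : cc P0 v = \sum_(j | R j) G (v, j).
    rewrite /cc [in RHS]big_mkcond; apply: eq_bigr => j _.
    rewrite !ffunE Rv; case: (R j) => /=; by rewrite ?uh ?vh ?eqxx.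
  have Ci : \sum_(i | R i) cc P0 i = \sum_(i | R i) (G (u, i) + G (v, i)).
    apply: eq_bigr => i Ri; rewrite /cc decomp !ffunE Ri Ru Rv hu /=.
    rewrite big1 ?addn0; last by move=> j Rj; rewrite ?ffunE Rj eqxx.
    by rewrite (Gsym i u) (Gsym i v).
  rewrite Cu Cv Ci big_split /= /V. by rewrite mul2n -addnn.
by move/eqP: E; rewrite eqn_pmul2l // => /eqP.
Qed.

Lemma cut_le_total (P : Defs.partition n) : cut G P <= total_weight G.
Proof.
rewrite /cut /total_weight [X in _ <= X]big_mkcond [X in X <= _]big_mkcond /=.
apply: leq_sum => p _; by case: (p.1 < p.2); case: (P p.1 != P p.2).
Qed.

Lemma mincut_val M : (forall j, j != h -> M <= G (h, j)) -> V <= 3 * M ->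
  mincut G u v h = V.
Proof.
move=> HM HV; apply/eqP; rewrite eqn_leq; apply/andP; split.
  have Ag : agrees P0 u v h.
    have Rh : R h by rewrite /R eq_sym uh eq_sym vh.
    have Ru : R u = false by rewrite /R eqxx.
    have Rv : R v = false by rewrite /R eqxx andbF.
    by rewrite /agrees !ffunE Ru Rv Rh uh.
  by rewrite /mincut -cutP0 bigmin_le // mem_index_enum.
rewrite /mincut; apply: (big_ind (fun x => V <= x)).
- by rewrite -cutP0 cut_le_total.
- by move=> x y Hx Hy; rewrite leq_min Hx Hy.
move=> P /andP [Pu Pv].
case: (boolP [forall i, (P i != P h) ==> ((i == u) || (i == v))]) => Hf.
  have H := low2 Pu Pv (fun i => implyP (forallP Hf i)).
  by rewrite leq_pmul2l in H.
move/forallPn: Hf => [t]; rewrite negb_imply negb_or => /and3P [Pt tu tv].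
have H := low3 Pu Pv Pt tu tv HM.
move: H HV; clear HM; move: (cut G P) V M; clear; move=> c w m; lia.
Qed.
End Generic.

Section Spec.
Variable n : nat.
Hypothesis hn : 3 <= n.

Definition lg := trunc_log 2 n.
Definition pp := (n - 1) %/ 2.

Lemma pp_bound : pp.*2.+1 <= n.
Proof. rewrite /pp; lia. Qed.
Lemma pp_pos : 0 < pp.
Proof. rewrite /pp; lia. Qed.
Lemma lg_pos : 0 < lg.
Proof.
have := trunc_log_ltn n (isT : 1 < 2); rewrite /lg.
case: (trunc_log 2 n) => //=; rewrite expn1; lia.
Qed.
Lemma lg_le : 2 ^ lg <= n.
Proof. apply: trunc_logP => //; lia. Qed.

Lemma n_pos : 0 < n. Proof. lia. Qed.
Definition h0 : 'I_n := Ordinal n_pos.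
Lemma uu_lt (a : 'I_pp) : a.+1 < n.
Proof. have := ltn_ord a; have := pp_bound; lia. Qed.
Lemma vv_lt (b : 'I_pp) : b + pp.+1 < n.
Proof. have := ltn_ord b; have := pp_bound; lia. Qed.
Definition uu (a : 'I_pp) : 'I_n := Ordinal (uu_lt a).
Definition vv (b : 'I_pp) : 'I_n := Ordinal (vv_lt b).

Definition Fam := {ffun 'I_pp * 'I_pp -> 'I_(2 ^ (4 * lg))}.

Definition X (f : Fam) (i j : 'I_n) : nat :=
  \sum_(e : 'I_pp * 'I_pp | (val i == e.1.+1) && (val j == e.2 + pp.+1)) f e
  + \sum_(e : 'I_pp * 'I_pp | (val j == e.1.+1) && (val i == e.2 + pp.+1)) f e.

Definition K := 2 * n ^ 7.
Definition M := 2 * K.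
Definition D (f : Fam) (i : 'I_n) := \sum_k X f i k.
Definition hub (f : Fam) (i j : 'I_n) : nat :=
  if val i == 0 then (if val j == 0 then 0 else M + K - D f j)
  else if val j == 0 then M + K - D f i else 0.
Definition Gf (f : Fam) : graph n := [ffun pr => X f pr.1 pr.2 + hub f pr.1 pr.2].

Lemma X_sym f i j : X f i j = X f j i.
Proof. by rewrite /X addnC. Qed.

Lemma X_diag f i : X f i i = 0.
Proof.
rewrite /X !big_pred0 //= => e; apply/negbTE; apply/negP => /andP [/eqP -> /eqP];
have := ltn_ord e.1; lia.
Qed.

Lemma X_h0 f j : X f h0 j = 0.
Proof. by rewrite /X !big_pred0 // => e /=; rewrite ?addnS ?andbF. Qed.

Lemma X_bound f i j : X f i j <= 2 * n ^ 6.
Proof.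
have Hf : forall e, f e <= n ^ 4.
  move=> e; have := ltn_ord (f e); have := lg_le => H1 H2.
  apply: leq_trans (ltnW H2) _; by rewrite mulnC expnM leq_exp2r.
have S : forall Q : pred ('I_pp * 'I_pp), \sum_(e | Q e) f e <= n ^ 6.
  move=> Q; apply: (@leq_trans (\sum_(e : 'I_pp * 'I_pp) n ^ 4)).
    rewrite big_mkcond /=; apply: leq_sum => e _; case: (Q e) => //.
  rewrite sum_nat_const card_prod card_ord.
  have : pp <= n by have := pp_bound; lia.
  move=> Hp; have -> : n ^ 6 = n * n * n ^ 4 by rewrite -mulnA -!expnS.
  by apply: leq_mul => //; apply: leq_mul.
rewrite /X mul2n -addnn; exact: leq_add (S _) (S _).
Qed.

Lemma D_bound f i : D f i <= K.
Proof.
rewrite /D /K; apply: (@leq_trans (\sum_(k : 'I_n) 2 * n ^ 6)).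
  by apply: leq_sum => k _; apply: X_bound.
by rewrite sum_nat_const card_ord mulnCA -expnS.
Qed.

Lemma X_uv f a b : X f (uu a) (vv b) = val (f (a, b)).
Proof.
rewrite /X /= [X in _ + X]big_pred0; last first.
  move=> e /=; apply/negbTE; apply/negP => /andP [/eqP H _].
  have := ltn_ord e.1; lia.
rewrite addn0 (big_pred1 (a, b)) // => -[x y] /=.
rewrite /pred1 /= xpair_eqE eqSS eqn_add2r.
by rewrite (eq_sym (a : nat)) (eq_sym (b : nat)).
Qed.


Lemma Gf_sym f i j : Gf f (i, j) = Gf f (j, i).
Proof.
rewrite !ffunE /= X_sym /hub.
by case: (val i == 0); case: (val j == 0).
Qed.

Lemma Gf_diag f i : Gf f (i, i) = 0.
Proof. by rewrite ffunE /= X_diag /hub; case: (val i == 0). Qed.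

Lemma Gf_bound f i j : Gf f (i, j) <= n ^ 9.
Proof.
rewrite ffunE /=.
have H1 := X_bound f i j.
have H2 : hub f i j <= M + K.
  rewrite /hub; case: (val i == 0); case: (val j == 0) => //; exact: leq_subr.
apply: leq_trans (leq_add H1 H2) _.
rewrite /M /K.
have -> : n ^ 7 = n * n ^ 6 by rewrite -expnS.
have -> : n ^ 9 = n * n * n * n ^ 6 by rewrite -!mulnA -!expnS.
move: (n ^ 6) => m.
have hnn : 9 <= n * n by have := leq_mul hn hn.
have h1 : 9 * (n * m) <= n * n * (n * m) by rewrite leq_mul2r hnn orbT.
have h2 : m <= n * m by rewrite leq_pmull //; lia.
rewrite -[n * n * n * m]mulnA -[n * n * (n * m)]mulnA in h1 *.
move: h1 h2; move: (n * m) (n * (n * (n * m))) => x y; lia.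
Qed.

Lemma neq_h0 (u : 'I_n) : u != h0 -> val u != 0.
Proof. by apply: contraNneq => H; apply/eqP; apply: val_inj. Qed.

Lemma deg_u f (u : 'I_n) : u != h0 -> \sum_j Gf f (u, j) = M + K.
Proof.
move=> /neq_h0 Hu.
rewrite (eq_bigr (fun j => X f u j + hub f u j)); last by move=> j _; rewrite ffunE.
rewrite big_split /= [Y in _ + Y](bigD1 h0) //= [Y in _ + (_ + Y)]big1; last first.
  move=> j /neq_h0 Hj; rewrite /hub (negbTE Hu) (negbTE Hj) //.
rewrite addn0 /hub (negbTE Hu) /=.
have := D_bound f u; rewrite /D /M; move: (\sum_k X f u k) => d; lia.
Qed.

Lemma hub_ge f j : j != h0 -> M <= Gf f (h0, j).
Proof.
move=> /neq_h0 Hj; rewrite ffunE /= X_h0 /hub /= (negbTE Hj).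
have := D_bound f j; move: (D f j) => d; lia.
Qed.

Lemma uv_ne a b : uu a != vv b.
Proof. apply/eqP => /(congr1 val) /=; have := ltn_ord a; lia. Qed.
Lemma uh_ne a : uu a != h0.
Proof. by apply/eqP => /(congr1 val). Qed.
Lemma vh_ne b : vv b != h0.
Proof. apply/eqP => /(congr1 val) /=; lia. Qed.

Lemma mincut_f f a b :
  mincut (Gf f) (uu a) (vv b) h0 + 2 * f (a, b) = 2 * (M + K).
Proof.
have Hdeg := degV (Gf_sym f) (Gf_diag f) (uv_ne a b) (uh_ne a) (vh_ne b).
rewrite (deg_u f (uh_ne a)) (deg_u f (vh_ne b)) in Hdeg.
have Guv : Gf f (uu a, vv b) = f (a, b).
  rewrite ffunE /= X_uv /hub /=.
  have -> : (b + pp.+1 == 0) = false by rewrite addnS.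
  by rewrite addn0.
rewrite Guv in Hdeg.
rewrite (mincut_val (Gf_sym f) (Gf_diag f) (uv_ne a b) (uh_ne a) (vh_ne b) (M := M)).
- by rewrite -Hdeg addnn mul2n.
- by move=> j; apply: hub_ge.
move: Hdeg; rewrite /M; move: (V _ _ _) (nat_of_ord (f (a, b))) K => x y k; lia.
Qed.
End Spec.

Theorem theorem14 :
  exists c k : nat, 0 < c /\
  forall n : nat, 3 <= n ->
  forall (enc : graph n -> seq bool)
         (dec : seq bool -> 'I_n -> 'I_n -> 'I_n -> nat),
  (forall G : graph n, wf_graph (n ^ k) G ->
     forall a1 a2 b : 'I_n, group_cut_21_query a1 a2 b ->
       dec (enc G) a1 a2 b = mincut G a1 a2 b) ->
  exists G : graph n, wf_graph (n ^ k) G /\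
    n ^ 2 * trunc_log 2 n <= c * size (enc G).
Proof.
exists 36, 9; split => // n hn enc dec Hdec.
have wf : forall f : Fam n, wf_graph (n ^ 9) (Gf f).
  move=> f; split; [exact: Gf_sym | split; [exact: Gf_diag | exact: Gf_bound hn f]].
have lgp := lg_pos hn; have ppp := pp_pos hn.
set L := lg n * pp n * pp n.
have Lpos : 0 < L by rewrite /L !muln_gt0 lgp ppp.
case: (boolP [exists f : Fam n, L <= size (enc (Gf f))]).
  move/existsP => [f Hf]; exists (Gf f); split; first exact: wf.
  apply: leq_trans (leq_mul (leqnn 36) Hf).
  have H6 : n <= 6 * pp n by rewrite /pp; lia.
  have H36 : n ^ 2 <= 36 * (pp n * pp n).
    by rewrite expnS expn1; apply: leq_trans (leq_mul H6 H6) _; rewrite mulnACA.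
  have H := leq_mul H36 (leqnn (lg n)).
  move: H; rewrite /L /lg; move: (trunc_log 2 n) (pp n) (n ^ 2) => a b c; nia.
move/existsPn => Hn; exfalso.
have Hlt : forall f, size (enc (Gf f)) < L by move=> f; rewrite ltnNge Hn.
have inj_code : injective (fun f : Fam n => enc (Gf f)).
  move=> f1 f2 /= E; apply/ffunP => -[a b]; apply: val_inj.
  have q : group_cut_21_query (uu hn a) (vv hn b) (h0 hn).
    by rewrite /group_cut_21_query uv_ne uh_ne vh_ne.
  have E1 := mincut_f hn f1 a b; have E2 := mincut_f hn f2 a b.
  have Em : mincut (Gf f1) (uu hn a) (vv hn b) (h0 hn) = mincut (Gf f2) (uu hn a) (vv hn b) (h0 hn).
    by rewrite -(Hdec _ (wf f1) _ _ _ q) -(Hdec _ (wf f2) _ _ _ q) E.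
  rewrite Em -E2 in E1.
  by move/eqP: E1; rewrite eqn_add2l eqn_pmul2l // => /eqP.
pose phi (f : Fam n) : 'I_L.+1 * {ffun 'I_L -> bool} :=
  (inord (size (enc (Gf f))), [ffun k : 'I_L => nth false (enc (Gf f)) k]).
have inj_phi : injective phi.
  move=> f1 f2 [E1 E2]; apply: inj_code => /=.
  have S1 := ltnW (Hlt f1); have S2 := ltnW (Hlt f2).
  have Es : size (enc (Gf f1)) = size (enc (Gf f2)).
    by rewrite -(inordK (n':=L) S1) -(inordK (n':=L) S2) E1.
  apply: (eq_from_nth (x0 := false) Es) => i Hi.
  have HiL : i < L by exact: ltn_trans Hi (Hlt f1).
  have := congr1 (fun g : {ffun 'I_L -> bool} => g (Ordinal HiL)) E2.
  by rewrite !ffunE.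
have := @leq_card _ _ phi inj_phi.
rewrite card_prod !card_ffun card_prod !card_ord.
rewrite (_ : #|_| = 2); last exact: card_bool.
rewrite -expnM.
have HL : L.+1 <= 2 ^ L by exact: ltn_expl.
move=> H; have := leq_trans H (leq_mul HL (leqnn (2 ^ L))).
rewrite -expnD leq_exp2l // /L; lia.
Qed.
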